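(* Let $\mathfrak g$ be a semisimple Lie algebra over an algebraically closed field of characteristic $0$, $\sigma_1\ne\sigma_2$ commuting involutions of $\mathfrak g$, and $\mathfrak g_{ij}=\{x:\sigma_1(x)=(-1)^ix,\ \sigma_2(x)=(-1)^jx\}$ for $i,j\in\{0,1\}$. Put $\mathfrak m_{ij}=[\mathfrak g_{ij},\mathfrak g_{ij}]\subset\mathfrak g_{00}$ and let $\kappa$ be the Killing form of $\mathfrak g$. Suppose $\mathfrak g_{11}=0$. Then (i) $[\mathfrak m_{01},\mathfrak g_{10}]=[\mathfrak m_{10},\mathfrak g_{01}]=0$; (ii) $\kappa(\mathfrak m_{01},\mathfrak m_{10})=0$ and $\mathfrak m_{01}\cap\mathfrak m_{10}=\{0\}$; (iii) $\mathfrak m_{10}\oplus\mathfrak g_{10}$ and $\mathfrak m_{01}\oplus\mathfrak g_{01}$ are ideals of $\mathfrak g$ with zero intersection.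
   Context: $\mathfrak g=\operatorname{Lie}(G)$ with $G$ connected semisimple; involutions induced from $G$. *)

(* Defs.v *)
From HB Require Import structures.
From mathcomp Require Import all_boot all_order all_algebra.
Set Implicit Arguments. Unset Strict Implicit. Unset Printing Implicit Defensive.
Import GRing.Theory.
Local Open Scope ring_scope.

Section Lie.
Variables (K : fieldType) (V : vectType K).

Definition is_lie_bracket (br : V -> V -> V) : Prop :=
  [/\ (forall (a : K) (x y z : V), br (a *: x + y) z = a *: br x z + br y z),
      (forall (a : K) (x y z : V), br x (a *: y + z) = a *: br x y + br x z),
      (forall x : V, br x x = 0) &
      (forall x y z : V, br x (br y z) + br y (br z x) + br z (br x y) = 0)].

Definition lie_brv (br : V -> V -> V) (A B : {vspace V}) : {vspace V} :=
  <<[seq br a b | a <- vbasis A, b <- vbasis B]>>%VS.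

Definition lie_ideal (br : V -> V -> V) (I : {vspace V}) : Prop :=
  forall x y : V, y \in I -> br x y \in I.

Fixpoint derived_series (br : V -> V -> V) (I : {vspace V}) (n : nat) : {vspace V} :=
  if n is n'.+1 then lie_brv br (derived_series br I n') (derived_series br I n')
  else I.

Definition lie_solvable (br : V -> V -> V) (I : {vspace V}) : Prop :=
  exists n, derived_series br I n = 0%VS.

Definition lie_semisimple (br : V -> V -> V) : Prop :=
  forall I : {vspace V}, lie_ideal br I -> lie_solvable br I -> I = 0%VS.

Definition vtrace (f : V -> V) : K :=
  \sum_(i < \dim (fullv : {vspace V}))
     coord (vbasis fullv) i (f (tnth (vbasis fullv) i)).

Definition killing (br : V -> V -> V) (x y : V) : K :=
  vtrace (fun z => br x (br y z)).

Definition lie_involution (br : V -> V -> V) (s : 'End(V)) : Prop :=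
  (forall x y : V, s (br x y) = br (s x) (s y)) /\ (s \o s = \1)%VF.

Definition gij (s1 s2 : 'End(V)) (i j : bool) : {vspace V} :=
  (lker (s1 - ((-1) ^+ i) *: \1%VF) :&: lker (s2 - ((-1) ^+ j) *: \1%VF))%VS.

Definition mij (br : V -> V -> V) (s1 s2 : 'End(V)) (i j : bool) : {vspace V} :=
  lie_brv br (gij s1 s2 i j) (gij s1 s2 i j).

End Lie.

(* Main.v *)
Require Import Defs.
From HB Require Import structures.
From mathcomp Require Import all_boot all_order all_algebra.
Import GRing.Theory.
Local Open Scope ring_scope.

Module Helpers.
Set Implicit Arguments. Unset Strict Implicit.

Section B.
Variables (K : fieldType) (V : vectType K) (br : V -> V -> V).
Hypothesis Hbr : is_lie_bracket br.

Lemma brDl x y z : br (x + y) z = br x z + br y z.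
Proof. case: Hbr => H _ _ _; by have := H 1 x y z; rewrite !scale1r. Qed.
Lemma brDr x y z : br z (x + y) = br z x + br z y.
Proof. case: Hbr => _ H _ _; by have := H 1 z x y; rewrite !scale1r. Qed.
Lemma br0l z : br 0 z = 0.
Proof. have h : br 0 z + br 0 z = br 0 z + 0 by rewrite -brDl !addr0. exact: addrI h. Qed.
Lemma br0r z : br z 0 = 0.
Proof. have h : br z 0 + br z 0 = br z 0 + 0 by rewrite -brDr !addr0. exact: addrI h. Qed.
Lemma brZl c x z : br (c *: x) z = c *: br x z.
Proof. case: Hbr => H _ _ _; by have := H c x 0 z; rewrite addr0 br0l addr0. Qed.
Lemma brZr c x z : br z (c *: x) = c *: br z x.
Proof. case: Hbr => _ H _ _; by have := H c z x 0; rewrite addr0 br0r addr0. Qed.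
Lemma brNl x z : br (- x) z = - br x z.
Proof. by rewrite -scaleN1r brZl scaleN1r. Qed.
Lemma brNr x z : br z (- x) = - br z x.
Proof. by rewrite -scaleN1r brZr scaleN1r. Qed.
Lemma br_anti x y : br x y = - br y x.
Proof.
case: Hbr => _ _ H _; apply/eqP; rewrite -addr_eq0.
have := H (x + y); rewrite brDl !brDr !H add0r addr0 => ->. by [].
Qed.
Lemma jacobi x y z : br x (br y z) + br y (br z x) + br z (br x y) = 0.
Proof. by case: Hbr. Qed.

Lemma brv_ind (P : V -> Prop) (A B : {vspace V}) : P 0 ->
  (forall c x y, P x -> P y -> P (c *: x + y)) ->
  (forall a b, a \in A -> b \in B -> P (br a b)) ->
  forall x, x \in lie_brv br A B -> P x.
Proof.
move=> P0 Pl Pg x; rewrite /lie_brv.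
set X := [seq br _ _ | _ <- _, _ <- _].
move=> /(@coord_span _ _ _ (in_tuple X)) ->.
elim/big_rec: _ => // i y _ Py; apply: Pl => //.
have : X`_i \in X by apply: mem_nth; exact: ltn_ord.
by case/allpairsP => -[a b] /= [ha hb ->]; apply: Pg; apply: vbasis_mem.
Qed.

Lemma brv_mem (A B : {vspace V}) a b : a \in A -> b \in B -> br a b \in lie_brv br A B.
Proof.
move=> /coord_vbasis -> /coord_vbasis ->.
elim/big_rec: _; first by rewrite br0l mem0v.
move=> i y _ Hy; rewrite brDl brZl rpredD // rpredZ //.
elim/big_rec: _; first by rewrite br0r mem0v.
move=> j w _ Hw; rewrite brDr brZr rpredD // rpredZ //.
apply: memv_span; apply/allpairsP; exists ((vbasis A)`_i, (vbasis B)`_j) => /=.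
by split => //; apply: mem_nth; rewrite size_tuple.
Qed.

Lemma brv_sub (A B C : {vspace V}) :
  (forall a b, a \in A -> b \in B -> br a b \in C) -> (lie_brv br A B <= C)%VS.
Proof.
move=> H; apply/subvP => x; apply: (@brv_ind (fun x => x \in C) A B (mem0v _) _ H).
by move=> c u w hu hw; rewrite rpredD // rpredZ.
Qed.

End B.

Set Implicit Arguments. Unset Strict Implicit.

Section I.
Variables (K : fieldType) (V : vectType K) (br : V -> V -> V) (s1 s2 : 'End(V)).
Hypothesis Hbr : is_lie_bracket br.
Hypothesis H1 : lie_involution br s1.
Hypothesis H2 : lie_involution br s2.
Hypothesis Hc : (s1 \o s2 = s2 \o s1)%VF.
Hypothesis H11 : gij s1 s2 true true = 0%VS.
Hypothesis H2ne : (2%:R : K) != 0.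

Lemma memg i j x : (x \in gij s1 s2 i j) =
   (s1 x == (-1) ^+ i *: x) && (s2 x == (-1) ^+ j *: x).
Proof. by rewrite memv_cap !memv_ker !lfunE /= !opp_lfunE !lfunE /= !lfunE /= !subr_eq0. Qed.

Lemma grade i j k l a b : a \in gij s1 s2 i j -> b \in gij s1 s2 k l ->
  br a b \in gij s1 s2 (i (+) k) (j (+) l).
Proof.
rewrite !memg => /andP[/eqP a1 /eqP a2] /andP[/eqP b1 /eqP b2].
case: H1 => h1 _; case: H2 => h2 _.
rewrite h1 h2 a1 a2 b1 b2 !(brZl Hbr) !(brZr Hbr) !scalerA !signr_addb.
by apply/andP; split; apply/eqP; congr (_ *: _); rewrite mulrC.


Qed.

Lemma invK s x : lie_involution br s -> s (s x) = x.
Proof. by case=> _ h; rewrite -comp_lfunE h id_lfunE. Qed.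

Lemma neg0 (x : V) : x = - x -> x = 0.
Proof.
move=> h; have : (2%:R : K) *: x = 0 by rewrite scaler_nat mulr2n {1}h addNr.
by move/eqP; rewrite scaler_eq0 (negbTE H2ne) => /eqP.
Qed.

Definition Q (s : 'End(V)) (e : K) (v : V) := 2%:R^-1 *: (v + e *: s v).

Lemma Qeig s e v : lie_involution br s -> e * e = 1 -> s (Q s e v) = e *: Q s e v.
Proof.
move=> hs he; rewrite /Q linearZ linearD linearZ /= invK //.
rewrite !scalerA mulrC -scalerA; congr (_ *: _).
by rewrite scalerDr scalerA he scale1r addrC.
Qed.

Lemma QZ s e c v : Q s e (c *: v) = c *: Q s e v.
Proof.
rewrite /Q linearZ /= !scalerDr !scalerA; congr (_ *: _ + _ *: _); rewrite mulrC //.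
by rewrite mulrA.
Qed.

Lemma Qsum s v : Q s 1 v + Q s (-1) v = v.
Proof.
rewrite /Q -scalerDr scale1r scaleN1r addrACA subrr addr0 -mulr2n -scaler_nat.
by rewrite scalerA mulVf // scale1r.
Qed.

Lemma sign_e (i : bool) : (-1) ^+ i * (-1) ^+ i = 1 :> K.
Proof. by case: i; rewrite /= ?expr0 ?expr1 ?mulr1 ?mulrNN ?mulr1. Qed.

Lemma Qcomm e u : s1 (Q s2 e u) = Q s2 e (s1 u).
Proof.
have hc : forall x, s1 (s2 x) = s2 (s1 x) by move=> x; rewrite -!comp_lfunE Hc.
by rewrite /Q linearZ linearD linearZ /= hc.
Qed.

Lemma Qmem (i j : bool) v : Q s2 ((-1) ^+ j) (Q s1 ((-1) ^+ i) v) \in gij s1 s2 i j.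
Proof.
rewrite memg Qeig // ?sign_e // eqxx andbT.
by rewrite Qcomm Qeig ?sign_e // QZ.
Qed.

Lemma decomp v : exists a b c, [/\ a \in gij s1 s2 false false,
   b \in gij s1 s2 true false, c \in gij s1 s2 false true & v = a + b + c].
Proof.
exists (Q s2 ((-1) ^+ false) (Q s1 ((-1) ^+ false) v)),
  (Q s2 ((-1) ^+ false) (Q s1 ((-1) ^+ true) v)),
  (Q s2 ((-1) ^+ true) (Q s1 ((-1) ^+ false) v)); split; try exact: Qmem.
have := Qmem true true v; rewrite H11 memv0 => /eqP h0.
rewrite expr0 expr1 in h0 *.
rewrite -[in LHS](Qsum s1 v) -[in LHS](Qsum s2 (Q s1 1 v)) -[in LHS](Qsum s2 (Q s1 (-1) v)) h0 addr0.
by rewrite addrAC.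
Qed.

End I.

Set Implicit Arguments. Unset Strict Implicit.

Section M.
Variables (K : fieldType) (V : vectType K) (br : V -> V -> V) (s1 s2 : 'End(V)).
Hypothesis Hbr : is_lie_bracket br.
Hypothesis H1 : lie_involution br s1.
Hypothesis H2 : lie_involution br s2.
Hypothesis Hc : (s1 \o s2 = s2 \o s1)%VF.
Hypothesis H11 : gij s1 s2 true true = 0%VS.
Hypothesis H2ne : (2%:R : K) != 0.
Hypothesis Hss : lie_semisimple br.

Local Notation g := (gij s1 s2).
Local Notation m := (mij br s1 s2).

Lemma inL (U W : {vspace V}) x : x \in U -> x \in (U + W)%VS.
Proof. by move=> h; rewrite -[x]addr0 memv_add // mem0v. Qed.
Lemma inR (U W : {vspace V}) x : x \in W -> x \in (U + W)%VS.
Proof. by move=> h; rewrite -[x]add0r memv_add // mem0v. Qed.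

Lemma g10g01 a b : a \in g true false -> b \in g false true -> br a b = 0.
Proof. by move=> ha hb; have := grade Hbr H1 H2 ha hb; rewrite /= H11 memv0 => /eqP. Qed.
Lemma g01g10 a b : a \in g false true -> b \in g true false -> br a b = 0.
Proof. by move=> ha hb; have := grade Hbr H1 H2 ha hb; rewrite /= H11 memv0 => /eqP. Qed.

Lemma m_sub i j x : x \in m i j -> x \in g false false.
Proof.
move: x; apply/subvP; apply: brv_sub => a b ha hb.
by have := grade Hbr H1 H2 ha hb; rewrite !addbb.
Qed.

Lemma F3 i j k l x z :
  (forall a b, a \in g i j -> b \in g k l -> br a b = 0) ->
  (forall a b, a \in g k l -> b \in g i j -> br a b = 0) ->
  x \in m i j -> z \in g k l -> br x z = 0.
Proof.
move=> h1 h2 hx hz.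
apply: (@brv_ind K V br (fun x => br x z = 0) _ _ _ _ _ x hx).
- exact: (br0l Hbr z).
- by move=> c u w hu hw; rewrite (brDl Hbr) (brZl Hbr) hu hw scaler0 addr0.
move=> a b ha hb; have := jacobi Hbr a b z.
rewrite (h1 b z) // (h2 z a) // !(br0r Hbr) => hz0; rewrite !add0r in hz0.
by rewrite (br_anti Hbr) hz0 oppr0.
Qed.

Lemma F4 i j k l x y :
  (forall a b, a \in g i j -> b \in g k l -> br a b = 0) ->
  (forall a b, a \in g k l -> b \in g i j -> br a b = 0) ->
  x \in m i j -> y \in m k l -> br x y = 0.
Proof.
move=> h1 h2 hx hy.
apply: (@brv_ind K V br (fun y => br x y = 0) _ _ _ _ _ y hy).
- exact: (br0r Hbr x).
- by move=> c u w hu hw; rewrite (brDr Hbr) (brZr Hbr) hu hw scaler0 addr0.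
move=> a b ha hb; have := jacobi Hbr x a b.
rewrite (br_anti Hbr b x) (F3 h1 h2 hx hb) (F3 h1 h2 hx ha) oppr0 !(br0r Hbr) !addr0.
by [].
Qed.

Lemma F5 i j z x : z \in g false false -> x \in m i j -> br z x \in m i j.
Proof.
move=> hz hx.
apply: (@brv_ind K V br (fun x => br z x \in m i j) _ _ _ _ _ x hx).
- by rewrite (br0r Hbr) mem0v.
- by move=> c u w hu hw; rewrite (brDr Hbr) (brZr Hbr) rpredD // rpredZ.
move=> a b ha hb; have := jacobi Hbr z a b.
move/eqP; rewrite -addrA addr_eq0 => /eqP ->.
rewrite rpredN rpredD // brv_mem //.
- by have := grade Hbr H1 H2 hb hz; rewrite !addbF.
- by have := grade Hbr H1 H2 hz ha.
Qed.


Lemma partI : lie_brv br (m false true) (g true false) = 0%VS.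
Proof.
apply/eqP; rewrite -subv0; apply: brv_sub => a b ha hb.
by rewrite (F3 g01g10 g10g01 ha hb) mem0v.
Qed.

Lemma partI' : lie_brv br (m true false) (g false true) = 0%VS.
Proof.
apply/eqP; rewrite -subv0; apply: brv_sub => a b ha hb.
by rewrite (F3 g10g01 g01g10 ha hb) mem0v.
Qed.

Lemma killing0 x y : x \in m false true -> y \in m true false -> killing br x y = 0.
Proof.
move=> hx hy.
have hz : forall z, br x (br y z) = 0.
  move=> z; have [a [b [c [ha hb hc ->]]]] := decomp H1 H2 Hc H11 H2ne z.
  rewrite !(brDr Hbr).
  have e1 : br y a \in m true false by rewrite (br_anti Hbr) rpredN F5.
  have e2 : br y b \in g true false by have := grade Hbr H1 H2 (m_sub hy) hb.
  rewrite (F4 g01g10 g10g01 hx e1) (F3 g01g10 g10g01 hx e2).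
  by rewrite (F3 g10g01 g01g10 hy hc) (br0r Hbr) !addr0.
rewrite /killing /vtrace big1 // => i _.
by rewrite hz linear0.
Qed.

Lemma capm : (m false true :&: m true false = 0)%VS.
Proof.
apply: Hss.
- move=> z y; rewrite memv_cap => /andP[hy1 hy2].
  have [a [b [c [ha hb hc ->]]]] := decomp H1 H2 Hc H11 H2ne z.
  rewrite !(brDl Hbr) rpredD ?rpredD //.
  + by rewrite memv_cap F5 // F5.
  + by rewrite (br_anti Hbr) (F3 g01g10 g10g01 hy1 hb) oppr0 mem0v.
  + by rewrite (br_anti Hbr) (F3 g10g01 g01g10 hy2 hc) oppr0 mem0v.
exists 1%N => /=.
apply/eqP; rewrite -subv0; apply: brv_sub => a b.
rewrite !memv_cap => /andP[ha1 ha2] /andP[hb1 hb2].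
by rewrite (F4 g01g10 g10g01 ha1 hb2) mem0v.
Qed.

Lemma dir10 : directv (m true false + g true false).
Proof.
apply/directv_addP/eqP; rewrite -subv0; apply/subvP => x.
rewrite memv_cap memv0 => /andP[hm hg].
have h0 := m_sub hm.
rewrite !memg in h0 hg; case/andP: h0 => /eqP e1 _; case/andP: hg => /eqP e2 _.
rewrite expr0 scale1r in e1; rewrite expr1 scaleN1r in e2.
by apply/eqP; apply: (neg0 H2ne); rewrite -{1}e1 e2.
Qed.

Lemma ideal10 : lie_ideal br (m true false + g true false)%VS.
Proof.
move=> z y /memv_addP[u hu [w hw ->]].
have [a [b [c [ha hb hc ->]]]] := decomp H1 H2 Hc H11 H2ne z.
rewrite !(brDl Hbr) !(brDr Hbr) !rpredD //.
- by apply: inL; apply: F5.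
- by apply: inR; have := grade Hbr H1 H2 ha hw.
- by apply: inR; have := grade Hbr H1 H2 hb (m_sub hu).
- by apply: inL; apply: brv_mem.
- by rewrite (br_anti Hbr) (F3 g10g01 g01g10 hu hc) oppr0 mem0v.
- by rewrite g01g10 // mem0v.
Qed.

Lemma capJ : ((m true false + g true false) :&: (m false true + g false true) = 0)%VS.
Proof.
apply/eqP; rewrite -subv0; apply/subvP => x.
rewrite memv_cap memv0 => /andP[/memv_addP[u hu [w hw ex]] /memv_addP[u' hu' [w' hw' ex']]].
have hu0 := m_sub hu; have hu0' := m_sub hu'.
rewrite !memg !expr0 !expr1 !scale1r !scaleN1r in hu0 hu0' hw hw'.
case/andP: hu0 => /eqP a1 /eqP a2; case/andP: hu0' => /eqP b1 /eqP b2.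
case/andP: hw => /eqP c1 /eqP c2; case/andP: hw' => /eqP d1 /eqP d2.
have E1 : u - w = u + w.
  have : s1 (u + w) = s1 (u' + w') by rewrite -ex -ex'.
  by rewrite !linearD /= a1 b1 c1 d1 -ex' ex.
have E2 : u' - w' = u' + w'.
  have : s2 (u + w) = s2 (u' + w') by rewrite -ex -ex'.
  by rewrite !linearD /= a2 b2 c2 d2 -ex ex' => <-.
have w0 : w = 0 by apply: (neg0 H2ne); rewrite (addrI _ E1).
have w0' : w' = 0 by apply: (neg0 H2ne); rewrite (addrI _ E2).
rewrite w0 addr0 in ex; rewrite w0' addr0 in ex'.
have : u \in (m false true :&: m true false)%VS.
  by rewrite memv_cap hu -[u]/(u) -ex ex' hu'.
by rewrite capm memv0 ex.
Qed.

End M.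

Lemma gswap (K : fieldType) (V : vectType K) (s1 s2 : 'End(V)) i j :
  gij s2 s1 j i = gij s1 s2 i j.
Proof. by rewrite /gij capvC. Qed.

Lemma mswap (K : fieldType) (V : vectType K) br (s1 s2 : 'End(V)) i j :
  mij br s2 s1 j i = mij br s1 s2 i j.
Proof. by rewrite /mij gswap. Qed.

End Helpers.
Import Helpers.

Theorem lemma3p1 (K : closedFieldType) (V : vectType K)
  (br : V -> V -> V) (s1 s2 : 'End(V)) :
  [pchar K] =i pred0 ->
  is_lie_bracket br ->
  lie_semisimple br ->
  lie_involution br s1 -> lie_involution br s2 ->
  s1 != s2 ->
  (s1 \o s2 = s2 \o s1)%VF ->
  gij s1 s2 true true = 0%VS ->
  (* (i) *)
  (lie_brv br (mij br s1 s2 false true) (gij s1 s2 true false) = 0%VS /\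
   lie_brv br (mij br s1 s2 true false) (gij s1 s2 false true) = 0%VS) /\
  (* (ii) *)
  ((forall x y : V, x \in mij br s1 s2 false true -> y \in mij br s1 s2 true false ->
      killing br x y = 0) /\
   (mij br s1 s2 false true :&: mij br s1 s2 true false = 0)%VS) /\
  (* (iii) *)
  [/\ directv (mij br s1 s2 true false + gij s1 s2 true false),
      directv (mij br s1 s2 false true + gij s1 s2 false true),
      lie_ideal br (mij br s1 s2 true false + gij s1 s2 true false)%VS,
      lie_ideal br (mij br s1 s2 false true + gij s1 s2 false true)%VS &
      ((mij br s1 s2 true false + gij s1 s2 true false) :&:
       (mij br s1 s2 false true + gij s1 s2 false true) = 0)%VS].

Proof.
move=> Hch Hbr Hss H1 H2 Hne Hc H11.
have H2ne : (2%:R : K) != 0.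
  by apply/negP => h2; have := Hch 2; rewrite !inE h2 /=.
have H11' : gij s2 s1 true true = 0%VS by rewrite gswap.
have Hc' := esym Hc.
split; [split|split; [split|]].
- exact: (partI Hbr H1 H2 H11).
- exact: (partI' Hbr H1 H2 H11).
- move=> x y hx hy; exact: (killing0 Hbr H1 H2 Hc H11 H2ne hx hy).
- exact: (capm Hbr H1 H2 Hc H11 H2ne Hss).
split.
- exact: (dir10 Hbr H1 H2 H2ne).
- have := dir10 Hbr H2 H1 H2ne; by rewrite mswap gswap.
- exact: (ideal10 Hbr H1 H2 Hc H11 H2ne).
- have := ideal10 Hbr H2 H1 Hc' H11' H2ne; by rewrite mswap gswap.
- exact: (capJ Hbr H1 H2 Hc H11 H2ne Hss).
Qed.
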